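(* Let $\mathbf{d}=(d_1,\dots,d_n)$ be nonnegative reals with $\sum_u d_u>0$, let $(m_k)_{k_{\min}\le k\le k_{\max}}$ be nonnegative integers (with $k_{\min}\ge 2$) satisfying $\sum_k k\,m_k=\sum_{u\in[n]}d_u$, and let $q\in[0,1]$. Let $G$ be the random multi-hypergraph generated by the simplicial Chung–Lu model with inputs $\mathbf{d}$, $(m_k)_k$ and $q$. Then for every $v\in[n]$, $\mathbb{E}[\deg_G(v)]=d_v$.
   Context: Degree in a multi-hypergraph: $\deg_G(v)=\sum_{e\in E(G)}m(v,e)$, where $m(v,e)$ is the multiplicity of $v$ in the (multiset) edge $e$. Let $p(v)=d_v/\sum_{u}d_u$. A Chung–Lu edge of size $k$ is the multiset $\{x_1,\dots,x_k\}$ with $x_1,\dots,x_k$ i.i.d. of law $p$. Simplicial edge of size $k$ given a current list $E$ of edges (with $E_k$ the sublist of edges of size $k$): if $E\setminus E_k$ is empty, return a fresh Chung–Lu edge of size $k$. Otherwise choose $e'$ uniformly at random from the list $E\setminus E_k$; if $|e'|<k$, return the multiset union of $e'$ with a fresh Chung–Lu edge of size $k-|e'|$; if $|e'|>k$, return a uniformly random choice of $k$ of the $|e'|$ entries of $e'$. Simplicial Chung–Lu model: let $S$ be a uniformly random ordering of the multiset of sizes containing $m_k$ copies of $k$ for each $k$. Start with $E$ empty. For each $k$ in $S$ in order, draw an independent $X\sim\mathrm{Bernoulli}(q)$; if $X=1$ generate a simplicial edge of size $k$ given the current $E$, otherwise generate a fresh Chung–Lu edge of size $k$; append it to $E$.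 Output $G=([n],E)$. All random choices are independent except as specified. *)

(* Defs.v *)
(* Finite-support probability distributions are represented
   explicitly as weighted lists (outcome, probability); expectation is the
   weighted sum. *)
From HB Require Import structures.
From mathcomp Require Import all_boot all_order all_algebra.
Set Implicit Arguments. Unset Strict Implicit. Unset Printing Implicit Defensive.
Import Order.TTheory GRing.Theory Num.Theory.
Local Open Scope ring_scope.

Section Model.
Variable R : realFieldType.

Definition dist (A : Type) := seq (A * R).
Definition dret (A : Type) (x : A) : dist A := [:: (x, 1)].
Definition dbind (A B : Type) (m : dist A) (f : A -> dist B) : dist B :=
  flatten [seq [seq (y.1, x.2 * y.2) | y <- f x.1] | x <- m].
Definition dexp (A : Type) (m : dist A) (f : A -> R) : R :=
  \sum_(x <- m) x.2 * f x.1.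
(* uniform choice of an entry (position) of a nonempty list *)
Definition dunif (A : Type) (l : seq A) : dist A :=
  [seq (x, (size l)%:R^-1) | x <- l].
Definition dbern (q : R) : dist bool := [:: (true, q); (false, 1 - q)].

Fixpoint ksub (A : Type) (k : nat) (s : seq A) : seq (seq A) :=
  match k, s with
  | 0, _ => [:: [::]]
  | k'.+1, [::] => [::]
  | k'.+1, x :: s' => [seq x :: t | t <- ksub k' s'] ++ ksub k s'
  end.

Variable n : nat.
Variable d : 'I_n -> R.

(* a hyperedge is a multiset of vertices, represented as a list *)
Definition edge := seq 'I_n.

Definition deg (E : seq edge) (v : 'I_n) : nat := \sum_(e <- E) count_mem v e.

Definition vsample : dist 'I_n :=
  [seq (u, d u / \sum_(w < n) d w) | u <- enum 'I_n].

Fixpoint cl_edge (k : nat) : dist edge :=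
  if k is k'.+1 then
    dbind vsample (fun x => dbind (cl_edge k') (fun e => dret (x :: e)))
  else dret [::].

Definition simp_edge (k : nat) (E : seq edge) : dist edge :=
  let L := [seq e <- E | (size e != k)%N] in
  if L is [::] then cl_edge k
  else dbind (dunif L) (fun e' =>
         if (size e' < k)%N then dbind (cl_edge (k - size e')) (fun f => dret (e' ++ f))
         else dunif (ksub k e')).

Fixpoint gen (q : R) (S : seq nat) (E : seq edge) : dist (seq edge) :=
  if S is k :: S' then
    dbind (dbern q) (fun X =>
      dbind (if X then simp_edge k E else cl_edge k) (fun e => gen q S' (rcons E e)))
  else dret E.

Definition sizes (kmin kmax : nat) (m : nat -> nat) : seq nat :=
  flatten [seq nseq (m k) k | k <- iota kmin (kmax.+1 - kmin)].

Definition simplicialCL (kmin kmax : nat) (m : nat -> nat) (q : R) : dist (seq edge) :=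
  dbind (dunif (permutations (sizes kmin kmax m))) (fun S => gen q S [::]).

End Model.

(* Main.v *)
Require Import Defs.
From Stdlib Require List.
From HB Require Import structures.
From mathcomp Require Import all_boot all_order all_algebra.
From mathcomp Require Import ring.
Set Implicit Arguments. Unset Strict Implicit. Unset Printing Implicit Defensive.
Import Order.TTheory GRing.Theory Num.Theory.
Local Open Scope ring_scope.

Section Gen.
Variable R : realFieldType.

Lemma dexp_ret (A : Type) (x : A) (f : A -> R) : dexp (dret R x) f = f x.
Proof. by rewrite /dexp /dret big_seq1 mul1r. Qed.

Lemma dexp_bind (A B : Type) (m : dist R A) (f : A -> dist R B) (g : B -> R) :
  dexp (dbind m f) g = dexp m (fun x => dexp (f x) g).
Proof.
elim: m => [|a m IH]; first by rewrite /dexp /dbind !big_nil.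
rewrite /dexp /dbind map_cons /= big_cat /= -/(dbind m f) -/(dexp (dbind m f) g) IH /dexp big_cons big_map big_distrr /=.
by congr (_ + _); apply: eq_bigr => y _; rewrite mulrA.
Qed.

Lemma dexp_ext (A : Type) (m : dist R A) (f g : A -> R) :
  (forall x, List.In x m -> f x.1 = g x.1) -> dexp m f = dexp m g.
Proof.
elim: m => [|a m IH] H; first by rewrite /dexp !big_nil.
rewrite /dexp !big_cons H /=; last by left.
by congr (_ + _); apply: IH => x Hx; apply: H; right.
Qed.

Lemma dexpD (A : Type) (m : dist R A) (f g : A -> R) :
  dexp m (fun x => f x + g x) = dexp m f + dexp m g.
Proof. by rewrite /dexp -big_split /=; apply: eq_bigr => x _; rewrite mulrDr. Qed.

Lemma dexpZ (A : Type) (m : dist R A) (c : R) (f : A -> R) :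
  dexp m (fun x => c * f x) = c * dexp m f.
Proof. by rewrite /dexp big_distrr /=; apply: eq_bigr => x _; rewrite mulrCA. Qed.

Lemma dexpB (A : Type) (m : dist R A) (f g : A -> R) :
  dexp m (fun x => f x - g x) = dexp m f - dexp m g.
Proof.
rewrite /dexp -sumrB /=; apply: eq_bigr => x _; by rewrite mulrBr.
Qed.

Lemma dexp_sum (A I : Type) (m : dist R A) (r : seq I) (P : pred I) (F : I -> A -> R) :
  dexp m (fun x => \sum_(i <- r | P i) F i x) = \sum_(i <- r | P i) dexp m (F i).
Proof.
rewrite /dexp (eq_bigr (fun x => \sum_(i <- r | P i) x.2 * F i x.1)); last first.
  by move=> x _; rewrite big_distrr.
by rewrite exchange_big.
Qed.

Definition mass (A : Type) (m : dist R A) := dexp m (fun _ => 1).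

Lemma dexp_const (A : Type) (m : dist R A) (c : R) : dexp m (fun _ => c) = c * mass m.
Proof. by rewrite -dexpZ mulr1. Qed.

Lemma mass_bind (A B : Type) (m : dist R A) (f : A -> dist R B) :
  (forall x, List.In x m -> mass (f x.1) = 1) -> mass (dbind m f) = mass m.
Proof. move=> H; rewrite /mass dexp_bind; exact: dexp_ext. Qed.

Lemma in_bind (A B : Type) (m : dist R A) (f : A -> dist R B) (P : B -> Prop) :
  (forall x, List.In x m -> forall y, List.In y (f x.1) -> P y.1) ->
  forall z, List.In z (dbind m f) -> P z.1.
Proof.
elim: m => [|a m IH] H z //=.
rewrite /dbind /= List.in_app_iff => -[Hz|Hz].
  move/List.in_map_iff: Hz => [y [<- Hy]] /=; apply: (H a) => //; by left.
by apply: IH Hz => x Hx; apply: H; right.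
Qed.

Lemma dexp_unif (A : Type) (l : seq A) (f : A -> R) :
  dexp (dunif R l) f = (size l)%:R^-1 * \sum_(x <- l) f x.
Proof. by rewrite /dexp /dunif big_map big_distrr. Qed.

Lemma mass_unif (A : Type) (l : seq A) : (size l != 0)%N -> mass (dunif R l) = 1.
Proof.
move=> Hl; rewrite /mass dexp_unif.
have -> : \sum_(x <- l) (1:R) = (size l)%:R.
  by elim: l {Hl} => [|a l IH]; rewrite ?big_nil // big_cons IH /= -addn1 natrD addrC.
rewrite mulVf //.
by rewrite pnatr_eq0.
Qed.

Lemma dexp_bern (q : R) (f : bool -> R) : dexp (dbern q) f = q * f true + (1 - q) * f false.
Proof. by rewrite /dexp /dbern big_cons big_seq1. Qed.

Lemma mass_bern (q : R) : mass (dbern q) = 1.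
Proof. by rewrite /mass dexp_bern !mulr1 addrC subrK. Qed.

End Gen.

Lemma sumRc (R : realFieldType) (A : Type) (r : seq A) (c : R) : \sum_(t <- r) c = c * (size r)%:R.
Proof. by elim: r => [|a r IH]; rewrite ?big_nil ?mulr0 // big_cons IH (_ : size (a :: r) = (size r).+1) // -addn1 natrD mulrDr mulr1 addrC. Qed.

Lemma In_mem (T : eqType) (x : T) (l : seq T) : List.In x l -> x \in l.
Proof.
elim: l => [|a l IH] //= [->|H]; first by rewrite inE eqxx.
by rewrite inE IH ?orbT.
Qed.

Lemma In_unif (R : realFieldType) (A : eqType) (l : seq A) z :
  List.In z (dunif R l) -> z.1 \in l.
Proof. by move/List.in_map_iff=> [x [<- Hx]] /=; apply: In_mem. Qed.

Lemma ksub0 (A : Type) (s : seq A) : ksub 0 s = [:: [::]].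
Proof. by case: s. Qed.

Lemma size_ksub (A : Type) k (s : seq A) : size (ksub k s) = 'C(size s, k).
Proof.
elim: s k => [|x s IH] [|k] //=.
by rewrite size_cat size_map !IH binS addnC.
Qed.

Lemma ksub_size (A : eqType) k (s : seq A) t : t \in ksub k s -> size t = k.
Proof.
elim: s k t => [|x s IH] [|k] t //=; rewrite ?inE; try by move/eqP->.
rewrite mem_cat => /orP[/mapP[u Hu ->]|/IH //].
by rewrite /= (IH _ _ Hu).
Qed.

Lemma sum_ksub_count (A : eqType) (v : A) k (s : seq A) :
  (\sum_(t <- ksub k.+1 s) count_mem v t = 'C((size s).-1, k) * count_mem v s)%N.
Proof.
elim: s k => [|x s IH] k; first by rewrite /= big_nil muln0.
rewrite /= big_cat big_map /=.
rewrite (eq_bigr (fun t => (x == v) + count_mem v t)%N) //.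
rewrite big_split /=.
have Hc : forall (r : seq (seq A)) (c : nat), (\sum_(t <- r) c = c * size r)%N.
  by move=> r c; elim: r => [|a r IHr]; rewrite ?big_nil ?muln0 // big_cons IHr mulnS.
rewrite Hc size_ksub IH.
case: s IH => [|y s] IH.
  case: k => [|k] /=; rewrite ?big_seq1 ?big_nil /= ?bin0 ?bin0n ?muln0 ?addn0 ?mul1n ?muln1 //.
have -> : size (y :: s) = (size s).+1 by [].
case: k => [|k].
  rewrite /= big_seq1 /= !bin0; ring.
have := IH k; rewrite /= => ->.
rewrite binS. ring.
Qed.

Section Model2.
Variable R : realFieldType.
Variable n : nat.
Variable d : 'I_n -> R.
Variable v : 'I_n.
Variable q : R.
Let D := \sum_(w < n) d w.
Hypothesis HD : D != 0.
Let p := d v / D.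

Lemma dexp_vsample (f : 'I_n -> R) :
  dexp (vsample d) f = \sum_(u < n) (d u / D) * f u.
Proof. by rewrite /dexp /vsample big_map big_enum. Qed.

Lemma mass_vsample : mass (vsample d) = 1.
Proof.
rewrite /mass dexp_vsample (eq_bigr (fun u => d u / D)); last by move=> u _; rewrite mulr1.
by rewrite -mulr_suml mulfV.
Qed.

Lemma mass_cl k : mass (cl_edge d k) = 1.
Proof.
elim: k => [|k IH] /=; first by rewrite /mass dexp_ret.
rewrite mass_bind ?mass_vsample // => x _.
by rewrite mass_bind // => y _; rewrite /mass dexp_ret.
Qed.

Lemma cl_size k z : List.In z (cl_edge d k) -> size z.1 = k.
Proof.
elim: k z => [|k IH] z /=; first by move=> [<-|].
apply: (in_bind (P := fun e => size e = k.+1)) => x _ y.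
apply: (in_bind (P := fun e => size e = k.+1)) => w Hw t /= [<-|] //=.
by rewrite (IH _ Hw).
Qed.

Definition cnt (e : edge n) : R := (count_mem v e)%:R.
Definition del (e : edge n) : R := cnt e - (size e)%:R * p.

Lemma cnt_cl k : dexp (cl_edge d k) cnt = k%:R * p.
Proof.
elim: k => [|k IH] /=; first by rewrite dexp_ret /cnt mul0r.
rewrite dexp_bind.
rewrite (dexp_ext (g := fun x => (x == v)%:R + k%:R * p)); last first.
  move=> x _; rewrite dexp_bind.
  rewrite (dexp_ext (g := fun e => (x.1 == v)%:R + cnt e)); last first.
    by move=> y _; rewrite dexp_ret /cnt /= natrD.
  by rewrite dexpD dexp_const mass_cl mulr1 IH.
rewrite dexpD dexp_const mass_vsample mulr1 dexp_vsample.
rewrite (bigD1 v) //= eqxx mulr1 big1 ?addr0; last first.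
  by move=> u /negbTE ->; rewrite mulr0.
by rewrite -natr1 mulrDl mul1r addrC.
Qed.

Lemma del_cl k : dexp (cl_edge d k) del = 0.
Proof.
rewrite /del dexpB cnt_cl.
rewrite (dexp_ext (g := fun _ => k%:R * p)); last by move=> z /cl_size ->.
by rewrite dexp_const mass_cl mulr1 subrr.
Qed.


Lemma del_cat e f : del (e ++ f) = del e + del f.
Proof.
rewrite /del /cnt count_cat size_cat !natrD mulrDl; ring.
Qed.

Definition cf k j : R := if (j < k)%N then 1 else k%:R / j%:R.

Lemma g_del k (e' : edge n) : size e' != k ->
  dexp (if (size e' < k)%N then dbind (cl_edge d (k - size e')) (fun f => dret R (e' ++ f))
        else dunif R (ksub k e')) del = cf k (size e') * del e'.
Proof.
move=> Hne; rewrite /cf; case: ltnP => Hlt.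
  rewrite dexp_bind (dexp_ext (g := fun f => del e' + del f)); last first.
    by move=> x _; rewrite dexp_ret del_cat.
  by rewrite dexpD dexp_const mass_cl del_cl mulr1 addr0 mul1r.
have Hlt' : (k < size e')%N by rewrite ltn_neqAle eq_sym Hne Hlt.
rewrite dexp_unif size_ksub.
case: k Hne Hlt Hlt' => [|k] Hne Hlt Hlt'.
  by rewrite ksub0 big_seq1 /del /cnt /= bin0 mul0r subrr mulr0 !mul0r.
rewrite [X in _ * X = _](_ : _ = \sum_(t <- ksub k.+1 e') cnt t - \sum_(t <- ksub k.+1 e') (size t)%:R * p); last by rewrite -sumrB.
rewrite [X in _ - X](eq_big_seq (fun _ => k.+1%:R * p)); last by move=> t /ksub_size ->.
rewrite /cnt -natr_sum sum_ksub_count sumRc size_ksub.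
set j := size e' in Hne Hlt Hlt' *.
have Hj : j = j.-1.+1 by rewrite prednK // (leq_ltn_trans _ Hlt').
have Hb : ('C(j.-1, k) * j = k.+1 * 'C(j, k.+1))%N by rewrite mulnC mul_bin_diag.
have HC : ('C(j, k.+1))%:R != 0 :> R by rewrite pnatr_eq0 -lt0n bin_gt0 ltnW.
have Hj0 : j%:R != 0 :> R by rewrite pnatr_eq0 -lt0n (leq_ltn_trans _ Hlt').
have HB : ('C(j.-1, k))%:R = (k.+1)%:R * ('C(j, k.+1))%:R / j%:R :> R.
  by rewrite -natrM -Hb natrM mulfK.
rewrite natrM HB /del /cnt -/j.
field.
by rewrite HC Hj0.
Qed.

Lemma simp_del k (E : seq (edge n)) :
  dexp (simp_edge d k E) del =
  (size [seq e <- E | size e != k])%:R^-1 * \sum_(e <- E | size e != k) cf k (size e) * del e.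
Proof.
rewrite /simp_edge /= -big_filter.
case HL: [seq e <- E | size e != k] => [|e0 L'].
  by rewrite del_cl big_nil mulr0.
rewrite dexp_bind dexp_unif; congr (_ * _).
rewrite !big_seq; apply: eq_bigr => e He; apply: g_del.
by move: He; rewrite -HL mem_filter => /andP[].
Qed.

Lemma mass_simp k (E : seq (edge n)) : mass (simp_edge d k E) = 1.
Proof.
rewrite /simp_edge /=.
case HL: [seq e <- E | size e != k] => [|e0 L']; first exact: mass_cl.
rewrite mass_bind ?mass_unif // => x _.
case: ltnP => H.
  by rewrite mass_bind ?mass_cl // => y _; rewrite /mass dexp_ret.
by rewrite mass_unif // size_ksub -lt0n bin_gt0.
Qed.

Lemma simp_size k (E : seq (edge n)) z : List.In z (simp_edge d k E) -> size z.1 = k.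
Proof.
rewrite /simp_edge /=.
case HL: [seq e <- E | size e != k] => [|e0 L']; first exact: cl_size.
apply: (in_bind (P := fun e => size e = k)) => x _.
case: ltnP => H.
  apply: (in_bind (P := fun e => size e = k)) => y Hy t /= [<-|] //=.
  by rewrite size_cat (cl_size Hy) subnKC // ltnW.
by move=> y /In_unif /ksub_size.
Qed.

Definition step k (E : seq (edge n)) : dist R (seq (edge n)) :=
  dbind (dbern q) (fun X => dbind (if X then simp_edge d k E else cl_edge d k)
                                 (fun e => dret R (rcons E e))).

Lemma step_size k (E : seq (edge n)) z : List.In z (step k E) -> z.1 = rcons E (last [::] z.1) /\ size (last [::] z.1) = k.
Proof.
apply: (in_bind (P := fun E' => E' = rcons E (last [::] E') /\ size (last [::] E') = k)) => X _.
apply: (in_bind (P := fun E' => E' = rcons E (last [::] E') /\ size (last [::] E') = k)) => y Hy.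
move=> t /= [<-|] //=; rewrite last_rcons; split => //.
by case: X Hy => [[] w] /=; [apply: simp_size | apply: cl_size].
Qed.

Lemma mass_step k E : mass (step k E) = 1.
Proof.
rewrite mass_bind ?mass_bern // => X _.
rewrite mass_bind; first by case: X => [[] w] /=; rewrite ?mass_simp ?mass_cl.
by move=> y _; rewrite /mass dexp_ret.
Qed.

Definition bal (s : seq nat) (mu : dist R (seq (edge n))) :=
  (forall z, List.In z mu -> map size z.1 = s) /\
  (forall i, (i < size s)%N -> dexp mu (fun E => del (nth [::] E i)) = 0).

Lemma sum_del_shape s (E : seq (edge n)) k : map size E = s ->
  \sum_(e <- E | size e != k) cf k (size e) * del e =
  \sum_(0 <= i < size s | nth 0%N s i != k) cf k (nth 0%N s i) * del (nth [::] E i).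
Proof.
move=> <-; rewrite (big_nth [::]) size_map big_mkcond [RHS]big_mkcond /=.
apply: eq_big_nat => i /andP[_ Hi].
by rewrite (nth_map [::]).
Qed.

Lemma simp_exp s mu k : bal s mu -> dexp mu (fun E => dexp (simp_edge d k E) del) = 0.
Proof.
move=> [Hs Hd].
rewrite (dexp_ext (g := fun E => (size [seq j <- s | j != k])%:R^-1 *
   \sum_(0 <= i < size s | nth 0%N s i != k) cf k (nth 0%N s i) * del (nth [::] E i))); last first.
  move=> z Hz; rewrite simp_del (sum_del_shape _ (Hs _ Hz)); congr (_^-1 * _).
  by rewrite -(Hs _ Hz) !size_filter count_map.
rewrite dexpZ dexp_sum big_seq_cond big1 ?mulr0 // => i /andP[Hi _].
move: Hi; rewrite mem_index_iota => /andP[_ Hi].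
by rewrite dexpZ Hd ?mulr0.
Qed.

Lemma bal_step s mu k : bal s mu -> bal (rcons s k) (dbind mu (step k)).
Proof.
move=> [Hs Hd]; split.
  apply: (in_bind (P := fun E => map size E = rcons s k)) => x Hx y Hy.
  have [Hy1 Hl] := step_size Hy.
  by rewrite Hy1 map_rcons Hs // Hl.
move=> i; rewrite size_rcons ltnS leq_eqVlt => /orP[/eqP ->|Hi].
  rewrite dexp_bind.
  rewrite (dexp_ext (g := fun E => q * dexp (simp_edge d k E) del)).
    by rewrite dexpZ (simp_exp _ (conj Hs Hd)) mulr0.
  move=> x Hx; rewrite dexp_bind dexp_bern !dexp_bind.
  have Hsz : size x.1 = size s.
  by have := congr1 size (Hs _ Hx); rewrite size_map.
  have Hg : forall m : dist R (edge n),
      dexp m (fun e => dexp (dret R (rcons x.1 e)) (fun E => del (nth [::] E (size s)))) = dexp m del.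
    move=> m; apply: dexp_ext => y _.
    by rewrite dexp_ret nth_rcons Hsz ltnn eqxx.
  rewrite !Hg.
  by rewrite /= del_cl mulr0 addr0.
rewrite dexp_bind -(Hd _ Hi); apply: dexp_ext => x Hx.
rewrite (dexp_ext (g := fun _ => del (nth [::] x.1 i))); last first.
  move=> y Hy; have [-> _] := step_size Hy.
  have Hsz : size x.1 = size s by have := congr1 size (Hs _ Hx); rewrite size_map.
  by rewrite nth_rcons Hsz Hi.
by rewrite dexp_const mass_step mulr1.
Qed.

Definition Del (G : seq (edge n)) : R := \sum_(e <- G) del e.

Lemma main_gen S : forall s mu, bal s mu -> dexp mu (fun E => dexp (gen d q S E) Del) = 0.
Proof.
elim: S => [|k S IH] s mu Hb.
  have [Hs Hd] := Hb.
  rewrite (dexp_ext (g := fun E => \sum_(0 <= i < size s) del (nth [::] E i))); last first.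
    by move=> z Hz; rewrite /= dexp_ret /Del (big_nth [::]) -(Hs _ Hz) size_map.
  rewrite dexp_sum big_seq big1 // => i; rewrite mem_index_iota => /andP[_ Hi].
  exact: Hd.
rewrite (dexp_ext (g := fun E => dexp (step k E) (fun E' => dexp (gen d q S E') Del))); last first.
  move=> x _; rewrite /= /step !dexp_bind; apply: dexp_ext => X _.
  rewrite !dexp_bind; apply: dexp_ext => y _; by rewrite dexp_ret.
by rewrite -dexp_bind; apply: IH; apply: bal_step Hb.
Qed.


Lemma gen_shape S : forall (E : seq (edge n)) z, List.In z (gen d q S E) -> map size z.1 = map size E ++ S.
Proof.
elim: S => [|k S IH] E z /=; first by move=> [<-|] //=; rewrite cats0.
apply: (in_bind (P := fun G => map size G = map size E ++ k :: S)) => X _.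
apply: (in_bind (P := fun G => map size G = map size E ++ k :: S)) => y Hy t Ht.
rewrite (IH _ _ Ht) map_rcons -cats1 -catA /=.
have -> : size y.1 = k by case: X Hy => [[] w] /=; [apply: simp_size | apply: cl_size].
by [].
Qed.

Lemma mass_gen S : forall (E : seq (edge n)), mass (gen d q S E) = 1.
Proof.
elim: S => [|k S IH] E /=; first by rewrite /mass dexp_ret.
rewrite mass_bind ?mass_bern // => X _.
rewrite mass_bind; first by case: X => [[] w] /=; rewrite ?mass_simp ?mass_cl.
by move=> y _; rewrite IH.
Qed.

Lemma gen_deg S : dexp (gen d q S [::]) (fun G => (deg G v)%:R) = (sumn S)%:R * p.
Proof.
rewrite (dexp_ext (g := fun G => Del G + (sumn S)%:R * p)); last first.
  move=> z Hz; have HS := gen_shape Hz; rewrite /= in HS; rewrite -HS.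
  rewrite /Del /del sumrB /deg natr_sum /cnt sumnE big_map natr_sum mulr_suml.
  by rewrite subrK.
rewrite dexpD dexp_const mass_gen mulr1.
have := main_gen S (s := [::]) (mu := dret R [::]).
rewrite dexp_ret => -> //; first by rewrite add0r.
by split => // z [<-|].
Qed.

End Model2.

Unset Implicit Arguments.

Theorem mainTheorem2 (R : realFieldType) (n : nat) (d : 'I_n -> R)
  (kmin kmax : nat) (m : nat -> nat) (q : R) :
  (forall u, 0 <= d u) -> 0 < \sum_(u < n) d u ->
  (2 <= kmin)%N ->
  \sum_(kmin <= k < kmax.+1) ((k * m k)%N)%:R = \sum_(u < n) d u ->
  0 <= q <= 1 ->
  forall v : 'I_n,
    dexp (simplicialCL d kmin kmax m q) (fun G => (deg G v)%:R) = d v.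
Proof.
move=> _ HD0 _ Hsum _ v.
have HD : \sum_(u < n) d u != 0 by rewrite lt0r_neq0.
rewrite /simplicialCL dexp_bind.
set S0 := sizes kmin kmax m.
rewrite (dexp_ext (g := fun _ => (sumn S0)%:R * (d v / \sum_(u < n) d u))); last first.
  move=> z /In_unif Hz; rewrite (gen_deg v q HD).
  by move: Hz; rewrite mem_permutations => /perm_sumn ->.
rewrite dexp_const mass_unif ?mulr1; last first.
  have : S0 \in permutations S0 by rewrite mem_permutations perm_refl.
  by case: (permutations S0).
have -> : (sumn S0)%:R = \sum_(u < n) d u.
  rewrite -Hsum /S0 /sizes sumn_flatten -map_comp sumnE big_map natr_sum.
  by apply: eq_bigr => k _; rewrite /= sumn_nseq.
by rewrite mulrC divfK.
Qed.
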